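(* (i) The following monomials of $P_5$ are strictly inadmissible: $x_1x_2^{6}x_3^{3}x_4^{6}x_5^{5}$, $x_1x_2^{6}x_3^{6}x_4^{3}x_5^{5}$, $x_1^{3}x_2^{5}x_3^{5}x_4^{2}x_5^{6}$, $x_1^{3}x_2^{5}x_3^{5}x_4^{6}x_5^{2}$, $x_1^{3}x_2^{5}x_3^{6}x_4^{5}x_5^{2}$, $x_1^{3}x_2^{4}x_3^{5}x_4^{3}x_5^{6}$, $x_1^{3}x_2^{4}x_3^{5}x_4^{6}x_5^{3}$, $x_1^{3}x_2^{5}x_3^{4}x_4^{3}x_5^{6}$, $x_1^{3}x_2^{5}x_3^{4}x_4^{6}x_5^{3}$, $x_1^{3}x_2^{5}x_3^{6}x_4^{4}x_5^{3}$. (ii) The following monomials of $P_5$ are strongly inadmissible: $x_1x_2^{3}x_3^{6}x_4^{6}x_5^{5}$, $x_1^{3}x_2x_3^{6}x_4^{6}x_5^{5}$, $x_1^{3}x_2^{5}x_3^{6}x_4^{6}x_5$, $x_1^{3}x_2^{5}x_3^{2}x_4^{6}x_5^{5}$, $x_1^{3}x_2^{5}x_3^{6}x_4^{2}x_5^{5}$.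
   Context: $P_5=\mathbb F_2[x_1,\dots,x_5]$, $\deg x_i=1$, a module over the mod-2 Steenrod algebra $\mathcal A$. $\mathcal A(s-1)$ is the sub-Hopf algebra generated by $Sq^r$, $0\le r<2^s$, with augmentation ideal $\mathcal A(s-1)^+$. For $x=x_1^{a_1}\cdots x_5^{a_5}$: weight vector $\omega_i(x)=\sum_j\alpha_{i-1}(a_j)$ ($\alpha_r(a)$ the $r$-th binary digit), exponent vector $\sigma(x)=(a_1,\dots,a_5)$, both ordered left-lexicographically; for monomials of equal degree, $x<y$ iff $\omega(x)<\omega(y)$, or $\omega(x)=\omega(y)$ and $\sigma(x)<\sigma(y)$. $P_5^-(\omega)$ is spanned by monomials $y$ of degree $\sum_i2^{i-1}\omega_i$ with $\omega(y)<\omega$. Minimal spike of degree $n$: if $\mu(n)=s\le5$, where $\mu(n)$ is the least $r$ with $n=\sum_{i=1}^r(2^{u_i}-1)$, $u_i>0$, write uniquely $n=\sum_{i=1}^s(2^{e_i}-1)$, $e_1>\dots>e_{s-1}\ge e_s>0$; the minimal spike is $z=\prod_{i=1}^sx_i^{2^{e_i}-1}$. $\mathcal P_{(5,n)}$ is spanned by monomials $x$ of degree $n$ with $\sum_{j=1}^h2^{j-1}\omega_j(x)<\sum_{j=1}^h2^{j-1}\omega_j(z)$ for some $h\ge1$. With $s=\max\{i:\omega_i(x)>0\}$: a monomial $x$ is strictly inadmissible if there are monomials $y_1,\dots,y_r<x$ with $x+\sum_jy_j\in\mathcal A(s-1)^+P_5+P_5^-(\omega(x))$; a monomial $x$ of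 degree $n$ is strongly inadmissible if there are monomials $y_1,\dots,y_t$ with $\omega(y_u)=\omega(x)$, $y_u<x$, and $x+\sum_uy_u\in\mathcal A(s-1)^+P_5+P_5^-(\omega(x))+\mathcal P_{(5,n)}$. *)

(* Defs.v *)
From HB Require Import structures.
From mathcomp Require Import all_boot all_order all_algebra.
From mathcomp Require Import mpoly.
Set Implicit Arguments. Unset Strict Implicit. Unset Printing Implicit Defensive.
Import GRing.Theory.
Local Open Scope ring_scope.

Definition mon5 := 'X_{1..5}.
Definition P5 := {mpoly 'F_2[5]}.

Definition mkmon (a b c d e : nat) : mon5 := [multinom of [:: a; b; c; d; e]].

(* Sq^k(x_1^{a_1}...x_5^{a_5}) = sum_{k_1+...+k_5=k} prod_j C(a_j,k_j) x_j^{a_j+k_j}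
   (Cartan formula together with Sq^k(x^a) = C(a,k) x^{a+k}). *)
Definition Sq_mon (k : nat) (m : mon5) : P5 :=
  \sum_(t : {ffun 'I_5 -> 'I_k.+1} | (\sum_(i < 5) (t i : nat))%N == k)
     ((\prod_(i < 5) 'C(m i, t i))%N)%:R *: 'X_[[multinom (m i + t i)%N | i < 5]].

Definition Sq (k : nat) (p : P5) : P5 :=
  \sum_(m <- msupp p) p@_m *: Sq_mon k m.

Definition Sqw (w : seq nat) (p : P5) : P5 := foldr Sq p w.

(* A(s-1)^+ P_5: the subspace spanned by theta(f), f in P_5, theta a (nonempty)
   product of generators Sq^r of A(s-1) with 0 < r < 2^s; these products span
   the augmentation ideal A(s-1)^+ (Sq^0 = 1). *)
Inductive AplusP (s : nat) : P5 -> Prop :=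
  | AplusP0 : AplusP s 0
  | AplusPD f g : AplusP s f -> AplusP s g -> AplusP s (f + g)
  | AplusPgen (w : seq nat) (f : P5) :
      w != [::] -> all (fun r => (0 < r < 2 ^ s)%N) w -> AplusP s (Sqw w f).

Definition alpha (r a : nat) : nat := odd (a %/ 2 ^ r).

(* wt m k = omega_{k+1}(m)  (0-based index) *)
Definition wt (m : mon5) (k : nat) : nat := (\sum_(j < 5) alpha k (m j))%N.

Definition wlt (u v : nat -> nat) : Prop :=
  exists k, (u k < v k)%N /\ forall j, (j < k)%N -> u j = v j.

Definition sigma_lt (m1 m2 : mon5) : Prop :=
  exists i : 'I_5, (m1 i < m2 i)%N /\ forall j : 'I_5, (j < i)%N -> m1 j = m2 j.

Definition mon_lt (x y : mon5) : Prop :=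
  mdeg x = mdeg y /\
  (wlt (wt x) (wt y) \/ (wt x =1 wt y /\ sigma_lt x y)).

(* P_5^-(omega) for omega a weight vector of degree d = sum_i 2^{i-1} omega_i:
   spanned by monomials y of degree d with omega(y) < omega. *)
Definition Pminus (w : nat -> nat) (d : nat) (f : P5) : Prop :=
  forall m, m \in msupp f -> mdeg m = d /\ wlt (wt m) w.

(* s = max{ i : omega_i(x) > 0 } (1-based) *)
Definition top_weight (x : mon5) (s : nat) : Prop :=
  (0 < s)%N /\ (0 < wt x s.-1)%N /\ forall k, (s <= k)%N -> wt x k = 0%N.

Definition spike_sum (u : seq nat) : nat := sumn [seq (2 ^ e - 1)%N | e <- u].

Definition min_spike (n : nat) (z : mon5) : Prop :=
  exists e : seq nat,
    (size e <= 5)%N /\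
    n = spike_sum e /\
    (* size e = mu(n): no shorter representation of n as a sum of 2^u - 1, u > 0 *)
    (forall u : seq nat, all (fun v => (0 < v)%N) u -> n = spike_sum u ->
       (size e <= size u)%N) /\
    (forall i, (i.+2 < size e)%N -> (nth 0%N e i.+1 < nth 0%N e i)%N) /\
    (forall i, i.+2 = size e -> (nth 0%N e i.+1 <= nth 0%N e i)%N) /\
    (0 < nth 0%N e (size e).-1)%N /\
    (forall i : 'I_5, z i = (if (i < size e)%N then 2 ^ nth 0%N e i - 1 else 0)%N).
Definition Pcal (n : nat) (z : mon5) (f : P5) : Prop :=
  forall m, m \in msupp f ->
    mdeg m = n /\
    exists h, (\sum_(k < h.+1) 2 ^ k * wt m k < \sum_(k < h.+1) 2 ^ k * wt z k)%N.

Definition strictly_inadmissible (x : mon5) : Prop :=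
  exists s, top_weight x s /\
  exists ys : seq mon5, (forall y, y \in ys -> mon_lt y x) /\
  exists a b : P5, AplusP s a /\ Pminus (wt x) (mdeg x) b /\
    'X_[x] + \sum_(y <- ys) 'X_[y] = a + b.

Definition strongly_inadmissible (x : mon5) : Prop :=
  exists s, top_weight x s /\
  exists z, min_spike (mdeg x) z /\
  exists ys : seq mon5,
    (forall y, y \in ys -> wt y =1 wt x /\ mon_lt y x) /\
  exists a b c : P5, AplusP s a /\ Pminus (wt x) (mdeg x) b /\ Pcal (mdeg x) z c /\
    'X_[x] + \sum_(y <- ys) 'X_[y] = a + b + c.

(* Main.v *)
Require Import Defs.
From mathcomp Require Import all_boot all_order all_algebra.
From mathcomp Require Import mpoly.
From mathcomp Require Import zify.
Set Implicit Arguments. Unset Strict Implicit. Unset Printing Implicit Defensive.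
Import GRing.Theory.
Local Open Scope ring_scope.

Lemma ord5P (P : 'I_5 -> Prop) :
  P (inord 0) -> P (inord 1) -> P (inord 2) -> P (inord 3) -> P (inord 4) ->
  forall i, P i.
Proof.
move=> H0 H1 H2 H3 H4 [[|[|[|[|[|k]]]]] Hk] //.
- by have -> : Ordinal Hk = inord 0 by apply/val_inj; rewrite /= inordK.
- by have -> : Ordinal Hk = inord 1 by apply/val_inj; rewrite /= inordK.
- by have -> : Ordinal Hk = inord 2 by apply/val_inj; rewrite /= inordK.
- by have -> : Ordinal Hk = inord 3 by apply/val_inj; rewrite /= inordK.
- by have -> : Ordinal Hk = inord 4 by apply/val_inj; rewrite /= inordK.
Qed.

Lemma big5 (R : Type) (idx : R) (op : Monoid.law idx) (F : 'I_5 -> R) :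
  \big[op/idx]_(i < 5) F i =
  op (F (inord 0)) (op (F (inord 1)) (op (F (inord 2)) (op (F (inord 3)) (op (F (inord 4)) idx)))).
Proof.
rewrite !big_ord_recl big_ord0.
have E : forall (j : 'I_5) k, val j = k -> F j = F (inord k).
  by move=> j k <-; rewrite inord_val.
rewrite (E ord0 0) //.
rewrite (E (lift ord0 ord0) 1) //.
rewrite (E (lift ord0 (lift ord0 ord0)) 2) //.
rewrite (E (lift ord0 (lift ord0 (lift ord0 ord0))) 3) //.
rewrite (E (lift ord0 (lift ord0 (lift ord0 (lift ord0 ord0)))) 4) //.
Qed.

Definition lst (m : mon5) : seq nat :=
  [:: m (inord 0); m (inord 1); m (inord 2); m (inord 3); m (inord 4)].

Lemma mkmon_at a b c d e :
  let m := mkmon a b c d e in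
  [/\ m (inord 0) = a, m (inord 1) = b, m (inord 2) = c, m (inord 3) = d & m (inord 4) = e].
Proof. by rewrite /= /mkmon !(mnm_nth 0) /= !inordK. Qed.

Lemma lst_mk a b c d e : lst (mkmon a b c d e) = [:: a; b; c; d; e].
Proof. by rewrite /lst /mkmon !(mnm_nth 0) /= !inordK. Qed.

Lemma lst_inj : injective lst.
Proof.
move=> m1 m2 [h0 h1 h2 h3 h4]; apply/mnmP; apply: ord5P => //.
Qed.

Definition mk (l : seq nat) : mon5 :=
  mkmon (nth 0 l 0) (nth 0 l 1) (nth 0 l 2) (nth 0 l 3) (nth 0 l 4).

Lemma lst_mkl l : size l = 5 -> lst (mk l) = l.
Proof. by case: l => [|a [|b [|c [|d [|e [|]]]]]] //= _; rewrite /mk lst_mk. Qed.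

Lemma mk_lst m : mk (lst m) = m.
Proof. by apply: lst_inj; rewrite lst_mkl. Qed.

Lemma mdeg_lst m : mdeg m = sumn (lst m).
Proof. by rewrite mdegE big5 /=. Qed.

Lemma wt_lst m k : wt m k = sumn [seq alpha k i | i <- lst m].
Proof. by rewrite /wt big5 /=. Qed.


Lemma sum5n (F : 'I_5 -> nat) : (\sum_(i < 5) F i =
  F (inord 0) + F (inord 1) + F (inord 2) + F (inord 3) + F (inord 4))%N.
Proof. by rewrite big5 /= !addnA addn0. Qed.

Lemma mcoeff_Sq_mon k (g m : mon5) :
  (Sq_mon k g)@_m =
  (if [forall i, g i <= m i]%N && (mdeg m == mdeg g + k)%N
   then (\prod_(i < 5) 'C(g i, m i - g i))%N else 0%N)%:R.
Proof.
rewrite /Sq_mon raddf_sum /=.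
under eq_bigr do rewrite mcoeffZ mcoeffX.
case: ifP => [/andP[/forallP le /eqP dg] | H].
- have dg' : (\sum_(i < 5) m i = \sum_(i < 5) g i + k)%N by rewrite -!mdegE.
  rewrite !sum5n in dg'.
  have bnd : forall i, (m i - g i < k.+1)%N.
    apply: ord5P; move: (le (inord 0)) (le (inord 1)) (le (inord 2)) (le (inord 3)) (le (inord 4)); lia.
  pose t0 : {ffun 'I_5 -> 'I_k.+1} := [ffun i => inord (m i - g i)].
  have t0E : forall i, (t0 i : nat) = (m i - g i)%N by move=> i; rewrite ffunE inordK.
  have St0 : (\sum_(i < 5) (t0 i : nat))%N == k.
    apply/eqP; rewrite sum5n !t0E.
    move: (le (inord 0)) (le (inord 1)) (le (inord 2)) (le (inord 3)) (le (inord 4)); lia.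
  rewrite (bigD1 t0) //= [X in _ + X]big1 ?addr0.
    have -> : [multinom (g i + t0 i)%N | i < 5] == m.
      apply/eqP/mnmP => i; rewrite mnmE t0E; move: (le i); lia.
    by rewrite mulr1 (eq_bigr (fun i => (binomial (g i) (m i - g i)))) // => i _; rewrite t0E.
  move=> t /andP[_ tne].
  have -> : ([multinom (g i + t i)%N | i < 5] == m) = false.
    apply/negbTE; apply: contra tne => /eqP/mnmP E.
    apply/eqP/ffunP => i; apply/val_inj; rewrite /= t0E -(E i) mnmE; lia.
  by rewrite mulr0.
- apply: big1 => t /eqP St.
  have -> : ([multinom (g i + t i)%N | i < 5] == m) = false.
    apply/negbTE/negP => /eqP E; move: H; rewrite -E.
    have -> : [forall i, g i <= [multinom (g i + t i)%N | i < 5] i]%N.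
      by apply/forallP => i; rewrite mnmE leq_addr.
    rewrite !mdegE.
    under eq_bigr do rewrite mnmE.
    by rewrite big_split /= St eqxx.
  by rewrite mulr0.
Qed.


Lemma forall5 (P : pred 'I_5) :
  [forall i, P i] = [&& P (inord 0), P (inord 1), P (inord 2), P (inord 3) & P (inord 4)].
Proof.
apply/forallP/idP => [H|]; first by rewrite !H.
by case/and5P => ? ? ? ? ?; apply: ord5P.
Qed.

Definition coefSq (g : seq nat) (k : nat) (l : seq nat) : nat :=
  if all2 leq g l && (sumn l == sumn g + k)%N
  then foldr muln 1%N [seq 'C(p.1, p.2 - p.1) | p <- zip g l] else 0%N.

Lemma SqX k (g : mon5) : Sq k 'X_[g] = Sq_mon k g.
Proof. by rewrite /Sq msuppX big_seq1 mcoeffX eqxx scale1r. Qed.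

Lemma mcoeff_SqX k (g m : mon5) :
  (Sq k 'X_[g])@_m = (coefSq (lst g) k (lst m))%:R.
Proof.
rewrite SqX mcoeff_Sq_mon /coefSq forall5 !mdeg_lst big5 /=.
by rewrite !andbT !muln1.
Qed.

Lemma F2_nat (n : nat) : (n%:R : 'F_2) = (odd n)%:R.
Proof. by rewrite -(@Fp_nat_mod 2 erefl n) modn2; case: (odd n). Qed.

Fixpoint comps (n k : nat) : seq (seq nat) :=
  match k with
  | 0 => if n == 0%N then [:: [::]] else [::]
  | k'.+1 => flatten [seq [seq i :: r | r <- comps (n - i) k'] | i <- iota 0 n.+1]
  end.

Lemma comps_complete k : forall l n, size l = k -> sumn l = n -> l \in comps n k.
Proof.
elim: k => [|k IH] [|a l] n //.
- by move=> _ <-; rewrite inE.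
- move=> [Hs] Hn.
  change (a :: l \in flatten [seq [seq i :: r | r <- comps (n - i) k] | i <- iota 0 n.+1]).
  apply/flatten_mapP; exists a.
    by rewrite mem_iota /=; move: Hn => /= ; lia.
  by apply: map_f; apply: IH => //; move: Hn => /=; lia.
Qed.

Definition XL (L : seq (seq nat)) : P5 := \sum_(l <- L) 'X_[mk l].
Definition SqL (gs : seq (nat * seq nat)) : P5 := \sum_(p <- gs) Sq p.1 'X_[mk p.2].

Lemma mk_eq l (m : mon5) : size l = 5%N -> (mk l == m) = (l == lst m).
Proof.
move=> Hl; apply/eqP/eqP => [<-|->]; first by rewrite lst_mkl.
by rewrite mk_lst.
Qed.

Lemma mcoeff_XL L m : all (fun l => size l == 5%N) L ->
  (XL L)@_m = (count_mem (lst m) L)%:R.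
Proof.
elim: L => [|l L IH] /=; first by rewrite /XL big_nil mcoeff0.
case/andP => /eqP Hl HL.
rewrite /XL big_cons mcoeffD mcoeffX -/(XL L) IH // mk_eq // natrD.
by [].

Qed.

Lemma mcoeff_SqL gs m : all (fun p => size p.2 == 5%N) gs ->
  (SqL gs)@_m = (sumn [seq coefSq p.2 p.1 (lst m) | p <- gs])%:R.
Proof.
elim: gs => [|p gs IH] /=; first by rewrite /SqL big_nil mcoeff0.
case/andP => /eqP Hl HL.
by rewrite /SqL big_cons mcoeffD mcoeff_SqX -/(SqL gs) IH // lst_mkl // natrD.
Qed.

Definition Fc x ys gs lb lc (l : seq nat) : nat :=
  ((x == l) + count_mem l ys + (sumn [seq coefSq p.2 p.1 l | p <- gs] + count_mem l lb + count_mem l lc))%N.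

Definition sz5 (L : seq (seq nat)) := all (fun l => size l == 5%N) L.
Definition dg (d : nat) (L : seq (seq nat)) := all (fun l => sumn l == d) L.

Definition ident_check d x ys gs lb lc :=
  [&& size x == 5%N, sumn x == d, sz5 ys, dg d ys, sz5 lb, dg d lb, sz5 lc, dg d lc,
   all (fun p => size p.2 == 5%N) gs, all (fun p => sumn p.2 + p.1 == d)%N gs &
   all (fun l => ~~ odd (Fc x ys gs lb lc l)) (comps d 5)].

Lemma count_dg d L l : dg d L -> sumn l != d -> count_mem l L = 0%N.
Proof.
move=> H Hl; apply/count_memPn; apply: contra Hl => Hin.
by move/allP: H => /(_ _ Hin).
Qed.

Lemma ident d x ys gs lb lc : ident_check d x ys gs lb lc ->
  'X_[mk x] + XL ys = SqL gs + XL lb + XL lc.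
Proof.
case/and5P => /eqP sx /eqP dx sys dys /and5P[slb dlb slc dlc /and3P[sgs dgs chk]].
apply/mpolyP => m.
rewrite !mcoeffD mcoeffX mcoeff_XL // mcoeff_SqL // !mcoeff_XL // mk_eq //.
rewrite -!natrD [LHS]F2_nat [RHS]F2_nat.
have [/eqP Hd|Hd] := boolP (sumn (lst m) == d).
- have := allP chk (lst m) (@comps_complete 5 (lst m) d erefl Hd).
  by rewrite /Fc oddD => /negPf; case: (odd _); case: (odd _).
- rewrite !(count_dg _ Hd) //.
  have -> : (x == lst m) = false.
    by apply/negbTE; apply: contra Hd => /eqP <-; rewrite dx.
  have -> : [seq coefSq p.2 p.1 (lst m) | p <- gs] = [seq 0%N | p <- gs].
    apply/eq_in_map => p /(allP dgs) /eqP Hp; rewrite /coefSq Hp.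
    by rewrite (negbTE Hd) andbF.
  have -> : sumn [seq 0%N | _ <- gs] = 0%N by elim: (gs) => //.
  by [].
Qed.


Definition wts (l : seq nat) k : nat := sumn [seq alpha k i | i <- l].

Lemma wt_mk l k : size l = 5%N -> wt (mk l) k = wts l k.
Proof. by move=> Hl; rewrite wt_lst lst_mkl. Qed.

Lemma mdeg_mk l : size l = 5%N -> mdeg (mk l) = sumn l.
Proof. by move=> Hl; rewrite mdeg_lst lst_mkl. Qed.

Lemma mk_nth l : size l = 5%N -> forall i : 'I_5, mk l i = nth 0%N l i.
Proof.
move=> Hl; have E := lst_mkl Hl.
apply: ord5P; rewrite inordK //.
- by rewrite -{2}E.
- by rewrite -{2}E.
- by rewrite -{2}E.
- by rewrite -{2}E.
- by rewrite -{2}E.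
Qed.

Lemma alpha_small k a : (a < 2 ^ k)%N -> alpha k a = 0%N.
Proof. by move=> H; rewrite /alpha divn_small. Qed.

Lemma wts_big l k : all (fun a => a < 32)%N l -> (5 <= k)%N -> wts l k = 0%N.
Proof.
move=> H Hk; rewrite /wts; elim: l H => //= a l IH /andP[Ha Hl].
rewrite IH // alpha_small //; apply: (leq_trans Ha).
by rewrite -[32%N]/(2 ^ 5)%N leq_exp2l.
Qed.

Definition weqb (l x : seq nat) :=
  all (fun k => wts l k == wts x k) (iota 0 5) && all (fun a => a < 32)%N l && all (fun a => a < 32)%N x.

Lemma weqbP l x : weqb l x -> wts l =1 wts x.
Proof.
case/andP => /andP[/allP H hl] hx k.
case: (ltnP k 5) => Hk; first by apply/eqP/H; rewrite mem_iota.
by rewrite !wts_big.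
Qed.

Definition wltb (l x : seq nat) :=
  has (fun k => (wts l k < wts x k) && all (fun j => wts l j == wts x j) (iota 0 k))%N (iota 0 5).

Lemma wltbP l x : wltb l x -> wlt (wts l) (wts x).
Proof.
case/hasP => k _ /andP[H1 /allP H2]; exists k; split => // j Hj.
by apply/eqP/H2; rewrite mem_iota.
Qed.

Definition sigltb (l x : seq nat) :=
  has (fun i => (nth 0 l i < nth 0 x i) && all (fun j => nth 0 l j == nth 0 x j) (iota 0 i))%N (iota 0 5).

Lemma sigltbP l x : size l = 5%N -> size x = 5%N -> sigltb l x -> sigma_lt (mk l) (mk x).
Proof.
move=> sl sx /hasP [i]; rewrite mem_iota /= => Hi /andP[H1 /allP H2].
exists (inord i); rewrite !mk_nth // inordK //; split => // j Hj.
by rewrite !mk_nth //; apply/eqP/H2; rewrite mem_iota.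
Qed.

Lemma sumn_big (f : nat -> nat) n : (\sum_(k < n) f k)%N = sumn [seq f k | k <- iota 0 n].
Proof. by rewrite -(big_mkord (fun _ => true)) sumnE big_map /index_iota subn0. Qed.

Definition pcalb (l z : seq nat) :=
  has (fun h => sumn [seq 2 ^ k * wts l k | k <- iota 0 h.+1] < sumn [seq 2 ^ k * wts z k | k <- iota 0 h.+1])%N (iota 0 5).

Lemma aplus_SqL s gs : all (fun p => 0 < p.1 < 2 ^ s)%N gs -> AplusP s (SqL gs).
Proof.
elim: gs => [|p gs IH] /=; first by rewrite /SqL big_nil; move=> _; exact: AplusP0.
case/andP => Hp Hgs; rewrite /SqL big_cons; apply: AplusPD; last exact: IH.
by apply: (AplusPgen (w := [:: p.1])) => //=; rewrite Hp.
Qed.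

Lemma msupp_XL L m : sz5 L -> m \in msupp (XL L) -> lst m \in L.
Proof.
move=> H; rewrite mcoeff_msupp mcoeff_XL // F2_nat.
by case: (boolP (lst m \in L)) => // /count_memPn ->.
Qed.

Lemma sum_map_mk ys : \sum_(y <- map mk ys) 'X_[y] = XL ys :> P5.
Proof. by rewrite big_map. Qed.

Lemma XL_nil : XL [::] = 0.
Proof. by rewrite /XL big_nil. Qed.


Lemma wts_zero l b k : all (fun a => a < 2 ^ b)%N l -> (b <= k)%N -> wts l k = 0%N.
Proof.
move=> H Hk; rewrite /wts; elim: l H => //= a l IH /andP[Ha Hl].
rewrite IH // alpha_small //; apply: (leq_trans Ha).
by rewrite leq_exp2l.
Qed.

Lemma top3 x : size x = 5%N -> (0 < wts x 2)%N -> all (fun a => a < 8)%N x -> top_weight (mk x) 3.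
Proof.
move=> sx H1 H2; split => //; split; first by rewrite wt_mk.
by move=> k Hk; rewrite wt_mk // (@wts_zero _ 3).
Qed.

Lemma ys_lt x y : size x = 5%N -> size y = 5%N -> sumn y = sumn x ->
  weqb y x -> sigltb y x -> wt (mk y) =1 wt (mk x) /\ mon_lt (mk y) (mk x).
Proof.
move=> sx sy dy we sl.
have E : wt (mk y) =1 wt (mk x) by move=> k; rewrite !wt_mk //; apply: weqbP.
split => //; split; first by rewrite !mdeg_mk.
by right; split => //; apply: sigltbP.
Qed.

Lemma wlt_ext u v u' v' : u =1 u' -> v =1 v' -> wlt u' v' -> wlt u v.
Proof.
move=> Eu Ev [k [H1 H2]]; exists k; rewrite Eu Ev; split => // j Hj.
by rewrite Eu Ev H2.
Qed.

Definition strict_check x ys gs lb :=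
 [&& ident_check (sumn x) x ys gs lb [::],
   all (fun p => 0 < p.1 < 8)%N gs,
   all (fun y => weqb y x && sigltb y x) ys,
   all (fun l => wltb l x) lb &
   (0 < wts x 2)%N && all (fun a => a < 8)%N x].

Lemma strict_cert x ys gs lb : strict_check x ys gs lb -> strictly_inadmissible (mk x).
Proof.
move=> H; have := H; case/and5P => Hid Hgs Hys Hlb /andP[Hw Ha].
have := Hid; case/and5P => /eqP sx _ sys dys /and5P[slb dlb _ _ _].
exists 3%N; split; first exact: top3.
exists (map mk ys); split.
  move=> y /mapP [l Hl ->].
  move/allP: Hys => /(_ _ Hl) /andP[we sl].
  move/allP: sys => /(_ _ Hl) /eqP sl5.
  move/allP: dys => /(_ _ Hl) /eqP dl.
  by case: (ys_lt sx sl5 dl we sl).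
exists (SqL gs), (XL lb); split; first exact: aplus_SqL.
split.
  move=> m /(msupp_XL slb) Hm.
  move/allP: slb => /(_ _ Hm) /eqP s5.
  move/allP: dlb => /(_ _ Hm) /eqP d5.
  move/allP: Hlb => /(_ _ Hm) Hw'.
  rewrite -(mk_lst m) !mdeg_mk // d5; split => //.
  apply: (@wlt_ext _ _ (wts (lst m)) (wts x)); last exact: wltbP.
    by move=> k; rewrite wt_mk.
  by move=> k; rewrite wt_mk.
by rewrite sum_map_mk (ident Hid) XL_nil addr0.
Qed.


Definition zsp : seq nat := [:: 15; 3; 3; 0; 0]%N.

Lemma pow2_ne k : (2 ^ k - 1 = 21)%N -> False.
Proof.
case: k => [|[|[|[|[|k]]]]] //.
rewrite !expnS; have := expn_gt0 2 k; lia.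
Qed.

Lemma pow2_ne2 v w : (2 ^ v - 1 + (2 ^ w - 1) = 21)%N -> False.
Proof.
have big : forall k, (5 <= k)%N -> (32 <= 2 ^ k)%N.
  by move=> k Hk; rewrite -[32%N]/(2 ^ 5)%N leq_exp2l.
case: (ltnP v 5) => Hv; last by have := big _ Hv; lia.
case: (ltnP w 5) => Hw; last by have := big _ Hw; lia.
by move: v w Hv Hw => [|[|[|[|[|v]]]]] [|[|[|[|[|w]]]]].
Qed.

Lemma min_spike21 : min_spike 21 (mk zsp).
Proof.
exists [:: 4; 2; 2]%N; split => //; split => //; split.
  move=> [|v [|w [|? ?]]] //= _.
  - move=> H; exfalso; apply: (@pow2_ne v); move: H; rewrite /spike_sum /=; lia.
  - move=> H; exfalso; apply: (@pow2_ne2 v w); move: H; rewrite /spike_sum /=; lia.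
split; first by case=> [|[|]].
split; first by case=> [|[|[|]]].
split => //.
by apply: ord5P; rewrite mk_nth // inordK.
Qed.

Definition strong_check x ys gs lb lc :=
 [&& ident_check (sumn x) x ys gs lb lc, sumn x == 21%N,
   all (fun p => 0 < p.1 < 8)%N gs,
   all (fun y => weqb y x && sigltb y x) ys,
   all (fun l => wltb l x) lb,
   all (fun l => pcalb l zsp) lc &
   (0 < wts x 2)%N && all (fun a => a < 8)%N x].

Lemma strong_cert x ys gs lb lc : strong_check x ys gs lb lc -> strongly_inadmissible (mk x).
Proof.
move=> H; have := H; case/and5P => Hid /eqP d21 Hgs Hys /and3P[Hlb Hlc /andP[Hw Ha]].
have := Hid; case/and5P => /eqP sx _ sys dys /and5P[slb dlb slc dlc _].
exists 3%N; split; first exact: top3.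
exists (mk zsp); split; first by rewrite mdeg_mk // d21; exact: min_spike21.
exists (map mk ys); split.
  move=> y /mapP [l Hl ->].
  move/allP: Hys => /(_ _ Hl) /andP[we sl].
  move/allP: sys => /(_ _ Hl) /eqP sl5.
  move/allP: dys => /(_ _ Hl) /eqP dl.
  exact: (ys_lt sx sl5 dl we sl).
exists (SqL gs), (XL lb), (XL lc); split; first exact: aplus_SqL.
split.
  move=> m /(msupp_XL slb) Hm.
  move/allP: slb => /(_ _ Hm) /eqP s5.
  move/allP: dlb => /(_ _ Hm) /eqP d5.
  move/allP: Hlb => /(_ _ Hm) Hw'.
  rewrite -(mk_lst m) !mdeg_mk // d5; split => //.
  apply: (@wlt_ext _ _ (wts (lst m)) (wts x)); last exact: wltbP.
    by move=> k; rewrite wt_mk.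
  by move=> k; rewrite wt_mk.
split.
  move=> m /(msupp_XL slc) Hm.
  move/allP: slc => /(_ _ Hm) /eqP s5.
  move/allP: dlc => /(_ _ Hm) /eqP d5.
  move/allP: Hlc => /(_ _ Hm) /hasP [h _ Hh].
  rewrite -(mk_lst m) !mdeg_mk // d5; split => //.
  exists h.
  rewrite (sumn_big (fun k => 2 ^ k * wt (mk (lst m)) k)%N) (sumn_big (fun k => 2 ^ k * wt (mk zsp) k)%N).
  have E1 : forall s l, size l = 5%N -> [seq (2 ^ k * wt (mk l) k)%N | k <- s] = [seq (2 ^ k * wts l k)%N | k <- s].
    by move=> s l Hl; apply/eq_map => k; rewrite wt_mk.
  by rewrite !E1.
by rewrite sum_map_mk (ident Hid).
Qed.

Lemma cert0 : strict_check [:: 1; 6; 3; 6; 5] [:: [:: 1; 3; 6; 5; 6]; [:: 1; 3; 6; 6; 5]; [:: 1; 5; 3; 6; 6]; [:: 1; 3; 5; 6; 6]; [:: 1; 6; 3; 5; 6]] [:: (1%N, [:: 1; 3; 5; 5; 6]); (1%N, [:: 1; 3; 5; 6; 5]); (1%N, [:: 1; 3; 6; 5; 5]); (1%N, [:: 1; 5; 3; 5; 6]); (1%N, [:: 1; 5; 3; 6; 5]); (1%N, [:: 1; 6; 3; 5; 5]); (2%N, [:: 1; 3; 5; 5; 5]); (2%N, [:: 1; 5; 3; 5; 5])] [:: [:: 2; 4; 5; 5; 5]; [:: 2; 5; 4; 5; 5]].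
Proof. by vm_compute. Qed.

Lemma cert1 : strict_check [:: 1; 6; 6; 3; 5] [:: [:: 1; 6; 5; 3; 6]; [:: 1; 3; 6; 5; 6]; [:: 1; 3; 6; 6; 5]; [:: 1; 3; 5; 6; 6]; [:: 1; 5; 6; 3; 6]] [:: (1%N, [:: 1; 3; 5; 5; 6]); (1%N, [:: 1; 3; 5; 6; 5]); (1%N, [:: 1; 3; 6; 5; 5]); (1%N, [:: 1; 5; 5; 3; 6]); (1%N, [:: 1; 5; 6; 3; 5]); (1%N, [:: 1; 6; 5; 3; 5]); (2%N, [:: 1; 3; 5; 5; 5]); (2%N, [:: 1; 5; 5; 3; 5])] [:: [:: 2; 5; 5; 4; 5]; [:: 2; 4; 5; 5; 5]].
Proof. by vm_compute. Qed.

Lemma cert2 : strict_check [:: 3; 5; 5; 2; 6] [:: [:: 3; 5; 3; 4; 6]; [:: 3; 3; 5; 4; 6]] [:: (1%N, [:: 3; 5; 5; 1; 6]); (1%N, [:: 5; 3; 5; 1; 6]); (1%N, [:: 5; 5; 3; 1; 6]); (2%N, [:: 3; 3; 5; 2; 6]); (2%N, [:: 3; 3; 6; 1; 6]); (2%N, [:: 3; 5; 3; 2; 6]); (2%N, [:: 3; 6; 3; 1; 6]); (2%N, [:: 6; 3; 3; 1; 6])] [:: [:: 3; 3; 5; 2; 8]; [:: 6; 4; 4; 1; 6]; [:: 3; 3; 6; 1; 8]; [:: 5; 4; 5; 1; 6]; [:: 3; 8; 3; 1; 6]; [:: 3; 5; 3; 2; 8]; [:: 4; 4; 5; 2; 6];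 [:: 4; 5; 4; 2; 6]; [:: 4; 6; 4; 1; 6]; [:: 3; 3; 8; 1; 6]; [:: 8; 3; 3; 1; 6]; [:: 4; 5; 5; 1; 6]; [:: 3; 6; 3; 1; 8]; [:: 6; 4; 3; 2; 6]; [:: 5; 5; 4; 1; 6]; [:: 6; 3; 3; 1; 8]; [:: 4; 4; 6; 1; 6]; [:: 6; 3; 4; 2; 6]].
Proof. by vm_compute. Qed.

Lemma cert3 : strict_check [:: 3; 5; 5; 6; 2] [:: [:: 3; 5; 3; 6; 4]; [:: 3; 3; 6; 5; 4]] [:: (1%N, [:: 3; 5; 3; 5; 4]); (1%N, [:: 3; 5; 5; 5; 2]); (1%N, [:: 5; 3; 3; 5; 4]); (1%N, [:: 5; 3; 5; 5; 2]); (1%N, [:: 5; 5; 3; 5; 2]); (2%N, [:: 3; 3; 3; 6; 4]); (2%N, [:: 3; 3; 5; 6; 2]); (2%N, [:: 3; 3; 6; 5; 2]); (2%N, [:: 3; 5; 3; 6; 2]); (2%N, [:: 3; 6; 3; 5; 2]); (2%N, [:: 6; 3; 3; 5; 2])] [:: [:: 3; 5; 4; 5; 4]; [:: 3; 3; 8; 5; 2]; [:: 5; 4; 5; 5; 2]; [:: 4; 4; 3; 6; 4]; [:: 8; 3; 3; 5; 2]; [:: 3; 3; 5; 8; 2]; [:: 4; 5; 4; 6; 2]; [:: 5; 5; 4; 5; 2]; [:: 6; 4; 3; 6; 2]; [:: 4; 5; 5; 5; 2]; [:: 3; 4; 4; 6; 4]; [:: 4; 4; 6; 5; 2]; [:: 5;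 3; 4; 5; 4]; [:: 4; 5; 3; 5; 4]; [:: 6; 3; 4; 6; 2]; [:: 3; 3; 3; 8; 4]; [:: 5; 4; 3; 5; 4]; [:: 6; 4; 4; 5; 2]; [:: 3; 5; 3; 8; 2]; [:: 4; 3; 4; 6; 4]; [:: 4; 6; 4; 5; 2]; [:: 3; 8; 3; 5; 2]; [:: 4; 4; 5; 6; 2]].
Proof. by vm_compute. Qed.

Lemma cert4 : strict_check [:: 3; 5; 6; 5; 2] [:: [:: 3; 5; 6; 3; 4]; [:: 3; 3; 5; 6; 4]] [:: (1%N, [:: 3; 5; 5; 3; 4]); (1%N, [:: 3; 5; 5; 5; 2]); (1%N, [:: 5; 3; 5; 3; 4]); (1%N, [:: 5; 3; 5; 5; 2]); (1%N, [:: 5; 5; 5; 3; 2]); (2%N, [:: 3; 3; 5; 6; 2]); (2%N, [:: 3; 3; 6; 3; 4]); (2%N, [:: 3; 3; 6; 5; 2]); (2%N, [:: 3; 5; 6; 3; 2]); (2%N, [:: 3; 6; 5; 3; 2]); (2%N, [:: 6; 3; 5; 3; 2])] [:: [:: 3; 3; 8; 5; 2]; [:: 5; 4; 5; 5; 2]; [:: 4; 6; 5; 4; 2]; [:: 3; 3; 5; 8; 2]; [:: 6; 4; 6; 3; 2]; [:: 3; 3; 8; 3; 4]; [:: 5; 4; 5; 3; 4]; [:: 5; 5; 5; 4; 2]; [:: 4; 5; 5; 5; 2]; [:: 3; 5; 5; 4; 4]; [:: 4; 5; 6; 4; 2]; [:: 4; 4; 6; 5; 2]; [:: 6; 3; 6;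 4; 2]; [:: 3; 5; 8; 3; 2]; [:: 4; 3; 6; 4; 4]; [:: 4; 5; 5; 3; 4]; [:: 3; 8; 5; 3; 2]; [:: 8; 3; 5; 3; 2]; [:: 4; 4; 6; 3; 4]; [:: 6; 4; 5; 4; 2]; [:: 3; 4; 6; 4; 4]; [:: 5; 3; 5; 4; 4]; [:: 4; 4; 5; 6; 2]].
Proof. by vm_compute. Qed.

Lemma cert5 : strict_check [:: 3; 4; 5; 3; 6] [:: [:: 3; 4; 3; 5; 6]; [:: 3; 1; 5; 6; 6]; [:: 3; 1; 6; 5; 6]] [:: (1%N, [:: 5; 1; 3; 5; 6]); (1%N, [:: 5; 1; 5; 3; 6]); (2%N, [:: 3; 1; 3; 6; 6]); (2%N, [:: 3; 1; 6; 3; 6]); (2%N, [:: 3; 2; 3; 5; 6]); (2%N, [:: 3; 2; 5; 3; 6]); (2%N, [:: 6; 1; 3; 3; 6])] [:: [:: 3; 1; 6; 3; 8]; [:: 4; 2; 5; 4; 6]; [:: 4; 1; 4; 6; 6]; [:: 5; 1; 5; 4; 6]; [:: 6; 2; 4; 3; 6]; [:: 5; 1; 4; 5; 6]; [:: 3; 1; 8; 3; 6]; [:: 8; 1; 3; 3; 6]; [:: 3; 1; 3; 8; 6]; [:: 4; 1; 6; 4; 6]; [:: 6; 1; 3; 3; 8]; [:: 6; 2; 3; 4; 6]; [:: 4; 2; 4; 5; 6]; [:: 3; 1; 3; 6; 8]; [:: 3; 2; 5; 3; 8]; [:: 3; 2; 3; 5; 8]; [:: 6; 1; 4; 4; 6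]].
Proof. by vm_compute. Qed.

Lemma cert6 : strict_check [:: 3; 4; 5; 6; 3] [:: [:: 3; 1; 6; 6; 5]; [:: 3; 4; 3; 6; 5]; [:: 3; 1; 5; 6; 6]] [:: (1%N, [:: 5; 1; 3; 6; 5]); (1%N, [:: 5; 1; 5; 6; 3]); (2%N, [:: 3; 1; 3; 6; 6]); (2%N, [:: 3; 1; 6; 6; 3]); (2%N, [:: 3; 2; 3; 6; 5]); (2%N, [:: 3; 2; 5; 6; 3]); (2%N, [:: 6; 1; 3; 6; 3])] [:: [:: 3; 1; 8; 6; 3]; [:: 4; 1; 4; 6; 6]; [:: 6; 1; 3; 8; 3]; [:: 5; 1; 4; 6; 5]; [:: 8; 1; 3; 6; 3]; [:: 3; 2; 5; 8; 3]; [:: 6; 2; 3; 6; 4]; [:: 3; 1; 6; 8; 3]; [:: 4; 1; 6; 6; 4]; [:: 3; 2; 3; 8; 5]; [:: 6; 1; 4; 6; 4]; [:: 4; 2; 4; 6; 5]; [:: 3; 1; 3; 8; 6]; [:: 6; 2; 4; 6; 3]; [:: 3; 1; 3; 6; 8]; [:: 5; 1; 5; 6; 4]; [:: 4; 2; 5; 6; 4]].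
Proof. by vm_compute. Qed.

Lemma cert7 : strict_check [:: 3; 5; 4; 3; 6] [:: [:: 3; 5; 2; 5; 6]; [:: 3; 3; 4; 5; 6]] [:: (1%N, [:: 3; 5; 1; 5; 6]); (1%N, [:: 5; 3; 1; 5; 6]); (1%N, [:: 5; 5; 1; 3; 6]); (2%N, [:: 3; 3; 1; 6; 6]); (2%N, [:: 3; 3; 2; 5; 6]); (2%N, [:: 3; 5; 2; 3; 6]); (2%N, [:: 3; 6; 1; 3; 6]); (2%N, [:: 6; 3; 1; 3; 6])] [:: [:: 5; 5; 1; 4; 6]; [:: 4; 5; 1; 5; 6]; [:: 3; 5; 2; 3; 8]; [:: 6; 4; 2; 3; 6]; [:: 6; 3; 1; 3; 8]; [:: 4; 4; 1; 6; 6]; [:: 4; 4; 2; 5; 6]; [:: 4; 6; 1; 4; 6]; [:: 6; 3; 2; 4; 6]; [:: 3; 3; 1; 8; 6]; [:: 3; 8; 1; 3; 6]; [:: 3; 3; 1; 6; 8]; [:: 4; 5; 2; 4; 6]; [:: 3; 3; 2; 5; 8]; [:: 3; 6; 1; 3; 8]; [:: 6; 4; 1; 4; 6]; [:: 5; 4; 1; 5; 6]; [:: 8; 3; 1; 3; 6]].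
Proof. by vm_compute. Qed.

Lemma cert8 : strict_check [:: 3; 5; 4; 6; 3] [:: [:: 3; 5; 2; 6; 5]; [:: 3; 3; 4; 6; 5]] [:: (1%N, [:: 3; 5; 1; 6; 5]); (1%N, [:: 5; 3; 1; 6; 5]); (1%N, [:: 5; 5; 1; 6; 3]); (2%N, [:: 3; 3; 1; 6; 6]); (2%N, [:: 3; 3; 2; 6; 5]); (2%N, [:: 3; 5; 2; 6; 3]); (2%N, [:: 3; 6; 1; 6; 3]); (2%N, [:: 6; 3; 1; 6; 3])] [:: [:: 3; 6; 1; 8; 3]; [:: 5; 4; 1; 6; 5]; [:: 6; 3; 1; 8; 3]; [:: 4; 6; 1; 6; 4]; [:: 6; 3; 2; 6; 4]; [:: 4; 4; 2; 6; 5]; [:: 6; 4; 2; 6; 3]; [:: 3; 3; 2; 8; 5]; [:: 4; 4; 1; 6; 6]; [:: 5; 5; 1; 6; 4]; [:: 3; 3; 1; 8; 6]; [:: 3; 5; 2; 8; 3]; [:: 4; 5; 2; 6; 4]; [:: 6; 4; 1; 6; 4]; [:: 4; 5; 1; 6; 5]; [:: 3; 8; 1; 6; 3]; [:: 8; 3; 1; 6; 3]; [:: 3; 3; 1; 6; 8]].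
Proof. by vm_compute. Qed.

Lemma cert9 : strict_check [:: 3; 5; 6; 4; 3] [:: [:: 3; 5; 6; 2; 5]; [:: 3; 3; 5; 4; 6]] [:: (1%N, [:: 3; 5; 5; 2; 5]); (1%N, [:: 3; 5; 5; 4; 3]); (1%N, [:: 5; 3; 5; 2; 5]); (1%N, [:: 5; 3; 5; 4; 3]); (1%N, [:: 5; 5; 5; 2; 3]); (2%N, [:: 3; 3; 5; 2; 6]); (2%N, [:: 3; 3; 6; 2; 5]); (2%N, [:: 3; 3; 6; 4; 3]); (2%N, [:: 3; 5; 6; 2; 3]); (2%N, [:: 3; 6; 5; 2; 3]); (2%N, [:: 6; 3; 5; 2; 3])] [:: [:: 5; 4; 5; 4; 3]; [:: 6; 4; 5; 2; 4]; [:: 3; 3; 5; 2; 8]; [:: 3; 3; 8; 4; 3]; [:: 4; 5; 5; 4; 3]; [:: 4; 6; 5; 2; 4]; [:: 3; 5; 5; 4; 4]; [:: 5; 4; 5; 2; 5]; [:: 3; 3; 8; 2; 5]; [:: 5; 5; 5; 2; 4]; [:: 4; 4; 5; 2; 6]; [:: 6; 4; 6; 2; 3]; [:: 4; 3; 6; 4; 4]; [:: 3; 5; 8; 2; 3]; [:: 4; 5; 6; 2; 4]; [:: 3; 8; 5; 2; 3]; [:: 4; 4; 6; 4; 3]; [:: 4; 5; 5; 2; 5]; [:: 6; 3; 6; 2; 4]; [:: 3; 4; 6; 4; 4]; [:: 4; 4; 6; 2; 5]; [:: 8; 3; 5; 2; 3]; [:: 5; 3; 5; 4; 4]].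
Proof. by vm_compute. Qed.

Lemma cert10 : strong_check [:: 1; 3; 6; 6; 5] [:: [:: 1; 3; 6; 5; 6]; [:: 1; 3; 5; 6; 6]] [:: (1%N, [:: 1; 3; 5; 5; 6]); (1%N, [:: 1; 3; 5; 6; 5]); (1%N, [:: 1; 3; 6; 5; 5]); (2%N, [:: 1; 3; 5; 5; 5])] [:: [:: 2; 4; 5; 5; 5]] [:: [:: 1; 5; 5; 5; 5]].
Proof. by vm_compute. Qed.

Lemma cert11 : strong_check [:: 3; 1; 6; 6; 5] [:: [:: 3; 1; 6; 5; 6]; [:: 3; 1; 5; 6; 6]] [:: (1%N, [:: 3; 1; 5; 5; 6]); (1%N, [:: 3; 1; 5; 6; 5]); (1%N, [:: 3; 1; 6; 5; 5]); (2%N, [:: 3; 1; 5; 5; 5])] [:: [:: 4; 2; 5; 5; 5]] [:: [:: 5; 1; 5; 5; 5]].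
Proof. by vm_compute. Qed.

Lemma cert12 : strong_check [:: 3; 5; 6; 6; 1] [:: [:: 3; 5; 6; 5; 2]; [:: 3; 5; 5; 6; 2]] [:: (1%N, [:: 3; 5; 5; 5; 2]); (1%N, [:: 3; 5; 5; 6; 1]); (1%N, [:: 3; 5; 6; 5; 1]); (2%N, [:: 3; 5; 5; 5; 1])] [:: [:: 4; 6; 5; 5; 1]] [:: [:: 5; 5; 5; 5; 1]].
Proof. by vm_compute. Qed.

Lemma cert13 : strong_check [:: 3; 5; 2; 6; 5] [:: [:: 3; 5; 1; 6; 6]; [:: 3; 5; 2; 5; 6]] [:: (1%N, [:: 3; 5; 1; 5; 6]); (1%N, [:: 3; 5; 1; 6; 5]); (1%N, [:: 3; 5; 2; 5; 5]); (2%N, [:: 3; 5; 1; 5; 5])] [:: [:: 4; 6; 1; 5; 5]] [:: [:: 5; 5; 1; 5; 5]].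
Proof. by vm_compute. Qed.

Lemma cert14 : strong_check [:: 3; 5; 6; 2; 5] [:: [:: 3; 5; 6; 1; 6]; [:: 3; 5; 5; 2; 6]] [:: (1%N, [:: 3; 5; 5; 1; 6]); (1%N, [:: 3; 5; 5; 2; 5]); (1%N, [:: 3; 5; 6; 1; 5]); (2%N, [:: 3; 5; 5; 1; 5])] [:: [:: 4; 6; 5; 1; 5]] [:: [:: 5; 5; 5; 1; 5]].
Proof. by vm_compute. Qed.

Local Close Scope ring_scope.

Theorem lemma4 :
  (forall x, x \in [:: mkmon 1 6 3 6 5; mkmon 1 6 6 3 5; mkmon 3 5 5 2 6;
                      mkmon 3 5 5 6 2; mkmon 3 5 6 5 2; mkmon 3 4 5 3 6;
                      mkmon 3 4 5 6 3; mkmon 3 5 4 3 6; mkmon 3 5 4 6 3;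
                      mkmon 3 5 6 4 3] ->
     strictly_inadmissible x) /\
  (forall x, x \in [:: mkmon 1 3 6 6 5; mkmon 3 1 6 6 5; mkmon 3 5 6 6 1;
                      mkmon 3 5 2 6 5; mkmon 3 5 6 2 5] ->
     strongly_inadmissible x).
Proof.
split.
- move=> x; rewrite !inE.
  do ![case/orP => [/eqP -> | ] | move/eqP ->].
  + exact: (strict_cert cert0).
  + exact: (strict_cert cert1).
  + exact: (strict_cert cert2).
  + exact: (strict_cert cert3).
  + exact: (strict_cert cert4).
  + exact: (strict_cert cert5).
  + exact: (strict_cert cert6).
  + exact: (strict_cert cert7).
  + exact: (strict_cert cert8).
  + exact: (strict_cert cert9).
- move=> x; rewrite !inE.
  do ![case/orP => [/eqP -> | ] | move/eqP ->].
  + exact: (strong_cert cert10).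
  + exact: (strong_cert cert11).
  + exact: (strong_cert cert12).
  + exact: (strong_cert cert13).
  + exact: (strong_cert cert14).
Qed.
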